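(* Let $r=[r_0,\ldots,r_m]$ and $c=[c_0,\ldots,c_n]$ be selections of rows and columns of the Pascal upper triangular matrix $T$, and let $\{\hat r,\hat c\}$ be an ordered sub-pair of $\{r,c\}$ of length $p+1\ge 1$, with $\hat r=[\hat r_0,\ldots,\hat r_p]$ and $\hat c=[\hat c_0,\ldots,\hat c_p]$. Then: (i) $T_{\hat r,\hat c}$ is a $(p+1)\times(p+1)$ invertible submatrix of $T_{r,c}$; (ii) $T_{\hat r,c}$ is a $(p+1)\times(n+1)$ matrix of full row rank $p+1$; (iii) $T_{r,\hat c}$ is an $(m+1)\times(p+1)$ matrix of full column rank $p+1$. If moreover $\{\hat r,\hat c\}$ is maximal, then: (iv) $\operatorname{rank}(T_{r,c})=p+1$; (v) the columns of $T_{r,\hat c}$ span the column space of $T_{r,c}$; (vi) the rows of $T_{\hat r,c}$ span the row space of $T_{r,c}$.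
   Context: The Pascal upper triangular matrix is the infinite matrix $T=(T_{i,j})_{i,j\ge 0}$ with $T_{i,j}=\binom{j}{i}$, where $\binom{j}{i}:=0$ if $i>j$ (rows and columns indexed from $0$). A selection of rows (resp. columns) is a strictly increasing finite sequence of nonnegative integers. For selections $r=[r_0,\ldots,r_m]$ and $c=[c_0,\ldots,c_n]$, $T_{r,c}$ denotes the $(m+1)\times(n+1)$ matrix whose $(i,j)$ entry is $\binom{c_j}{r_i}$. A pair $\{\hat r,\hat c\}$ is an ordered sub-pair of $\{r,c\}$ of length $p+1$ if $\hat r=[\hat r_0,\ldots,\hat r_p]$ is a subsequence of $r$, $\hat c=[\hat c_0,\ldots,\hat c_p]$ is a subsequence of $c$, and $\hat r_i\le \hat c_i$ for all $i=0,\ldots,p$ (the empty pair has length $0$). It is maximal if no ordered sub-pair of $\{r,c\}$ has length greater than $p+1$. *)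

(* Defs.v *)
From HB Require Import structures.
From mathcomp Require Import all_boot all_order all_algebra.
Set Implicit Arguments. Unset Strict Implicit. Unset Printing Implicit Defensive.
Import Order.TTheory GRing.Theory Num.Theory.

Definition selection (s : seq nat) : bool := sorted ltn s.

(* T_{r,c} : the submatrix of the Pascal upper triangular matrix T (T_{i,j} = C(j,i))
   with rows r and columns c; entry (i,j) is binom(c_j, r_i) (which is 0 when r_i > c_j). *)
Definition pascal_sub (m n : nat) (r c : seq nat) : 'M[rat]_(m, n) :=
  \matrix_(i < m, j < n) ('C(nth 0%N c j, nth 0%N r i))%:R%R.

Definition ordered_subpair (r c rh ch : seq nat) : Prop :=
  [/\ size rh = size ch, subseq rh r, subseq ch c &
      forall i, (i < size rh)%N -> (nth 0%N rh i <= nth 0%N ch i)%N].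

Definition maximal_subpair (r c rh ch : seq nat) : Prop :=
  ordered_subpair r c rh ch /\
  forall rh' ch', ordered_subpair r c rh' ch' -> (size rh' <= size rh)%N.

(* Main.v *)
Require Import Defs.
From HB Require Import structures.
From mathcomp Require Import all_boot all_order all_algebra.
From mathcomp Require Import zify ring lra.
Import Order.TTheory GRing.Theory Num.Theory.
Set Implicit Arguments. Unset Strict Implicit. Unset Printing Implicit Defensive.
Local Open Scope ring_scope.

Definition PM q (r c : nat -> nat) : 'M[rat]_q :=
  \matrix_(i < q, j < q) ('C(c j, r i))%:R.
Definition IM q (s a b : nat -> nat) : 'M[rat]_q :=
  \matrix_(i < q, j < q) \sum_(a j <= k < b j) ('C(k, s i))%:R.
Definition incr q (f : nat -> nat) := forall i j, (i < j)%N -> (j < q)%N -> (f i < f j)%N.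

Lemma hockey c r : 'C(c, r.+1) = (\sum_(0 <= k < c) 'C(k, r))%N.
Proof.
elim: c => [|c IH]; first by rewrite big_geq.
by rewrite binS IH big_nat_recr //= addnC.
Qed.

Lemma hockey_diff d c r : (d <= c)%N ->
  ('C(c, r.+1))%:R - ('C(d, r.+1))%:R = \sum_(d <= k < c) ('C(k, r))%:R :> rat.
Proof.
move=> dc; rewrite !hockey (@big_cat_nat _ _ _ d 0 c _ _ (leq0n d) dc) /= natrD natr_sum.
by rewrite natr_sum addrC addKr.
Qed.

Lemma eq_sym_neq_lift n (j : 'I_n) i : lift j i != j.
Proof. by rewrite eq_sym neq_lift. Qed.

Lemma det_col_add q (A B C : 'M[rat]_q) j :
  (forall i, A i j = B i j + C i j) ->
  (forall i k, k != j -> B i k = A i k /\ C i k = A i k) ->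
  \det A = \det B + \det C.
Proof.
move=> HA HB; rewrite -det_tr -(det_tr B) -(det_tr C).
rewrite (@determinant_multilinear _ _ A^T B^T C^T j 1 1) ?mul1r //.
- by apply/rowP => k; rewrite !mxE HA !mul1r.
- apply/matrixP => i k; rewrite !mxE; have := HB k (lift j i) (eq_sym_neq_lift j i).
  by case.
- apply/matrixP => i k; rewrite !mxE; have := HB k (lift j i) (eq_sym_neq_lift j i).
  by case.
Qed.

Lemma det_col0 q (A : 'M[rat]_q) j : (forall i, A i j = 0) -> \det A = 0.
Proof.
by move=> H; rewrite (expand_det_col _ j) big1 // => i _; rewrite H mul0r.
Qed.

Lemma incr_succ q f : (forall j, (j.+1 < q)%N -> (f j < f j.+1)%N) -> incr q f.
Proof.
move=> H i j ij; elim: j ij => [|j IH] //; rewrite ltnS leq_eqVlt => /orP[/eqP-> |ij] jq.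
  exact: H.
apply: ltn_trans (IH ij (ltnW jq)) (H _ jq).
Qed.

Definition Umx q : 'M[rat]_q := \matrix_(k < q, j < q) ((k == j)%:R - (k.+1 == j :> nat)%:R).

Lemma det_Umx q : \det (Umx q) = 1.
Proof.
rewrite -det_tr det_trig; last first.
  apply/is_trig_mxP => i j ij; rewrite !mxE.
  have -> : (j == i) = false by apply/negbTE; rewrite neq_ltn ij orbT.
  have -> : (j.+1 == i :> nat) = false by apply/negbTE; lia.
  by rewrite subrr.
by rewrite big1 // => i _; rewrite !mxE eqxx; have -> : (i.+1 == i :> nat) = false by lia.
Qed.

Lemma mulU0 q (A : 'M[rat]_q) i (j : 'I_q) : nat_of_ord j = 0%N -> (A *m Umx q) i j = A i j.
Proof.
move=> j0; rewrite !mxE (bigD1 j) //= !mxE eqxx.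
have -> : (j.+1 == j :> nat) = false by lia.
rewrite subr0 mulr1 big1 ?addr0 // => k kj; rewrite !mxE.
have -> : (k == j) = false by apply/negbTE.
have -> : (k.+1 == j :> nat) = false by lia.
by rewrite subrr mulr0.
Qed.

Lemma mulUS q (A : 'M[rat]_q) i (j j' : 'I_q) : nat_of_ord j = j'.+1 ->
   (A *m Umx q) i j = A i j - A i j'.
Proof.
move=> jj; rewrite !mxE (bigD1 j) //= (bigD1 j') /=; last by apply/eqP => e; move: jj; rewrite e; lia.
rewrite !mxE eqxx.
have -> : (j.+1 == j :> nat) = false by lia.
have -> : (j' == j) = false by apply/negbTE/eqP => e; move: jj; rewrite e; lia.
have -> : (j'.+1 == j :> nat) by rewrite jj.
rewrite big1 ?addr0; first by rewrite /= mulr1 sub0r mulrN1.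
move=> k /andP[kj kj']; rewrite !mxE (negbTE kj).
have -> : (k.+1 == j :> nat) = false.
  by apply/negbTE; apply: contra kj' => /eqP e; apply/eqP/val_inj => /=; lia.
by rewrite subrr mulr0.
Qed.

Lemma sum_lt q (F G : 'I_q -> nat) j : (forall x, x != j -> F x = G x) -> (F j < G j)%N ->
  (\sum_(x < q) F x < \sum_(x < q) G x)%N.
Proof.
move=> H lt; rewrite (bigD1 j) //= [X in (_ < X)%N](bigD1 j) //=.
rewrite (eq_bigr G) ?ltn_add2r // => x /andP[_ xj]; exact: H.
Qed.

Lemma IM_pos q (s : nat -> nat)
  (H : forall c, incr q c -> 0 <= \det (PM q s c) /\
        ((forall i, (i < q)%N -> (s i <= c i)%N) -> 0 < \det (PM q s c))) :
  forall a b, (forall j, (j.+1 < q)%N -> (b j <= a j.+1)%N) ->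
  0 <= \det (IM q s a b) /\
  ((forall j, (j < q)%N -> (a j < b j)%N /\ (s j < b j)%N) -> 0 < \det (IM q s a b)).
Proof.
suff: forall N (a b : nat -> nat), (\sum_(j < q) (b j - a j) <= N)%N ->
  (forall j, (j.+1 < q)%N -> (b j <= a j.+1)%N) ->
  0 <= \det (IM q s a b) /\
  ((forall j, (j < q)%N -> (a j < b j)%N /\ (s j < b j)%N) -> 0 < \det (IM q s a b)).
  by move=> HN a b; apply: HN.
have leaf : forall a b : nat -> nat, (forall j, (j.+1 < q)%N -> (b j <= a j.+1)%N) ->
   (forall j : 'I_q, b j = (a j).+1) ->
  0 <= \det (IM q s a b) /\
  ((forall j, (j < q)%N -> (a j < b j)%N /\ (s j < b j)%N) -> 0 < \det (IM q s a b)).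
  move=> a b Hord Hb.
  have -> : IM q s a b = PM q s a.
    by apply/matrixP => i j; rewrite !mxE Hb big_nat1.
  have ia : incr q a.
    apply: incr_succ => j jq; have := Hord j jq; have := Hb (Ordinal (ltnW jq)) => /= ->.
    lia.
  have [H1 H2] := H a ia; split => // P; apply: H2 => i iq.
  have := P i iq; have := Hb (Ordinal iq) => /= ->; lia.
elim=> [|N IH] a b HN Hord.
all: case: (boolP [exists j : 'I_q, (b j <= a j)%N]) => [/existsP[j jle]|/existsP Hne].
1,3: rewrite (@det_col0 _ _ j) => [|i]; last by rewrite mxE big_geq.
1,2: split => // P; by have := P j (ltn_ord j); lia.
all: have Hne' : forall j : 'I_q, (a j < b j)%N by move=> j; rewrite ltnNge; apply/negP => h; apply: Hne; exists j.
all: case: (boolP [exists j : 'I_q, ((a j).+1 < b j)%N]) => [/existsP[j jlt]|/existsP Hone].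
- exfalso; move: HN; rewrite leqn0 sum_nat_eq0 => /forallP /(_ j); lia.
- apply: leaf => // j; have := Hne' j; have : ~~ ((a j).+1 < b j)%N.
    by apply/negP => h; apply: Hone; exists j.
  lia.
- pose b1 := fun x => if x == nat_of_ord j then (b j).-1 else b x.
  pose a2 := fun x => if x == nat_of_ord j then (b j).-1 else a x.
  have Hsplit : \det (IM q s a b) = \det (IM q s a b1) + \det (IM q s a2 b).
    apply: (@det_col_add _ _ _ _ j) => [i|i k kj].
      rewrite !mxE /b1 /a2 eqxx (@big_cat_nat _ _ _ (b j).-1) //=; lia.
    have kj' : (nat_of_ord k == nat_of_ord j) = false by apply/negbTE.
    by rewrite !mxE /b1 /a2 kj'.
  have m1 : (\sum_(x < q) (b1 x - a x) <= N)%N.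
    rewrite -ltnS; apply: leq_trans HN; apply: (@sum_lt _ _ _ j).
      by move=> x xj; rewrite /b1; have -> : (nat_of_ord x == nat_of_ord j) = false by apply/negbTE.
    by rewrite /b1 eqxx; lia.
  have m2 : (\sum_(x < q) (b x - a2 x) <= N)%N.
    rewrite -ltnS; apply: leq_trans HN; apply: (@sum_lt _ _ _ j).
      by move=> x xj; rewrite /a2; have -> : (nat_of_ord x == nat_of_ord j) = false by apply/negbTE.
    by rewrite /a2 eqxx; lia.
  have o1 : forall x, (x.+1 < q)%N -> (b1 x <= a x.+1)%N.
    move=> x xq; rewrite /b1; case: eqP => [e|_]; last exact: Hord.
    have := Hord x xq; subst x; move=> h; apply: leq_trans h; exact: leq_pred.
  have o2 : forall x, (x.+1 < q)%N -> (b x <= a2 x.+1)%N.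
    move=> x xq; rewrite /a2; case: eqP => [e|_]; last exact: Hord.
    have := Hord x xq; rewrite e; lia.
  have [P1 _] := IH a b1 m1 o1.
  have [P2 P3] := IH a2 b m2 o2.
  rewrite Hsplit; split; first by rewrite addr_ge0.
  move=> P; have : 0 < \det (IM q s a2 b).
    apply: P3 => x xq; have [h1 h2] := P x xq; split => //.
    rewrite /a2; case: eqP => // ->; lia.
  move=> h; lra.
- apply: leaf => // j; have := Hne' j; have : ~~ ((a j).+1 < b j)%N.
    by apply/negP => h; apply: Hone; exists j.
  lia.
Qed.

Definition PMprop q r c := 0 <= \det (PM q r c) /\
  ((forall i, (i < q)%N -> (r i <= c i)%N) -> 0 < \det (PM q r c)).

Lemma det_PMU q r c : \det (PM q r c) = \det (PM q r c *m Umx q).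
Proof. by rewrite det_mulmx det_Umx mulr1. Qed.

Lemma PM_caseS q r c :
  (forall c, incr q c -> PMprop q (fun i => (r i).-1) c) ->
  incr q r -> incr q c -> (0 < r 0)%N -> PMprop q r c.
Proof.
move=> IH ir ic r0.
have rpos : forall i, (i < q)%N -> (0 < r i)%N.
  by case=> [|i] iq //; have := ir 0%N i.+1 (ltn0Sn _) iq; lia.
pose a := fun j => if j is j'.+1 then c j' else 0%N.
have E : PM q r c *m Umx q = IM q (fun i => (r i).-1) a c.
  apply/matrixP => i j; case: (boolP (nat_of_ord j == 0%N)) => [/eqP j0|jpos].
    rewrite mulU0 // !mxE /a j0 -(@hockey_diff 0) //.
    by rewrite prednK ?rpos // bin0n; have := rpos i (ltn_ord i); case: (r i) => // n _; rewrite subr0.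
  have hj : (j.-1 < q)%N by have := ltn_ord j; lia.
  have jj : nat_of_ord j = (Ordinal hj).+1 by rewrite /= prednK // lt0n.
  rewrite (mulUS _ _ jj) !mxE /a /=.
  rewrite jj /= -hockey_diff; first by rewrite (prednK (rpos i (ltn_ord i))).
  by apply: ltnW; apply: ic => //; rewrite -jj.

rewrite /PMprop det_PMU E.
have Hd := @IM_pos q (fun i => (r i).-1) (IH) a c.
have Ho : forall j, (j.+1 < q)%N -> (c j <= a j.+1)%N by move=> j _; rewrite /a.
have [H1 H2] := Hd Ho; split => // P; apply: H2 => j jq; have := P j jq.
have := rpos j jq; case: j jq => [|j] jq /=; rewrite /a; first by lia.
by have := ic j j.+1 (ltnSn _) jq; lia.
Qed.

Lemma PM_case0 q r c :
  (forall r c, incr q r -> incr q c -> PMprop q r c) ->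
  incr q.+1 r -> incr q.+1 c -> r 0%N = 0%N -> PMprop q.+1 r c.
Proof.
move=> IH ir ic r0.
have rpos : forall i, (0 < i)%N -> (i < q.+1)%N -> (0 < r i)%N.
  by move=> i ip iq; have := ir 0%N i ip iq; lia.
set M := PM q.+1 r c *m Umx q.+1.
have E : row' 0 (col' 0 M) = IM q (fun i => (r i.+1).-1) c (fun j => c j.+1).
  apply/matrixP => i j; rewrite 2!mxE.
  have jj : nat_of_ord (lift 0 j) = (widen_ord (leqnSn q) j).+1 by rewrite lift0.
  rewrite (mulUS _ _ jj) !mxE !lift0 /= -hockey_diff.
    by rewrite (prednK (rpos i.+1 (ltn0Sn _) (ltn_ord i))).
  by apply: ltnW; apply: (ic j j.+1 (ltnSn _) (ltn_ord j)).
have D : \det M = \det (row' 0 (col' 0 M)).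
  rewrite (expand_det_row _ 0) big_ord_recl big1 ?addr0.
    by rewrite /M mulU0 // !mxE r0 bin0 /cofactor /= expr0 !mul1r.
  move=> j _.
  have jj : nat_of_ord (lift 0 j) = (widen_ord (leqnSn q) j).+1 by rewrite lift0.
  by rewrite /M (mulUS _ _ jj) !mxE r0 !bin0 subrr mul0r.
rewrite /PMprop det_PMU -/M D E.
have isr : incr q (fun i => (r i.+1).-1).
  move=> i j ij jq; have := ir i.+1 j.+1 ij jq; have := rpos i.+1 (ltn0Sn _) (ltn_trans ij jq).
  lia.
have Hd := @IM_pos q (fun i => (r i.+1).-1) (fun c' ic' => IH _ c' isr ic') c (fun j => c j.+1).
have [H1 H2] := Hd (fun j _ => leqnn _); split => // P; apply: H2 => j jq; split.
  by apply: ic.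
have := P j.+1 jq; have := rpos j.+1 (ltn0Sn _) jq; lia.
Qed.

Lemma PM_pos q r c : incr q r -> incr q c -> PMprop q r c.
Proof.
elim: q r c => [|q IHq] r c ir ic.
  by rewrite /PMprop det_mx00; split => //; rewrite ?ler01 ?ltr01.
suff: forall N r c, (r 0%N <= N)%N -> incr q.+1 r -> incr q.+1 c -> PMprop q.+1 r c.
  by move=> H; apply: (H (r 0%N)).
elim=> [|N IHN] {}r {}c rN {}ir {}ic.
  by apply: PM_case0 => //; lia.
case: (posnP (r 0%N)) => [r0|rpos]; first exact: PM_case0.
apply: PM_caseS => // c' ic'; apply: IHN => //.
  lia.
move=> i j ij jq; have := ir i j ij jq; case: i ij => [|i] ij /=.
  lia.
have := ir 0%N i.+1 (ltn0Sn _) (leq_trans ij (ltnW jq)); lia.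
Qed.

Lemma PM_conv q r c : incr q r -> incr q c -> PM q r c \in unitmx ->
  forall i, (i < q)%N -> (r i <= c i)%N.
Proof.
move=> irr ic U k kq; rewrite leqNgt; apply/negP => ck.
have ir : forall i, (k <= i)%N -> (i < q)%N -> (r k <= r i)%N.
  move=> i; rewrite leq_eqVlt => /orP[/eqP->//|ki] iq.
  by apply: ltnW; apply: irr.
set A := PM q r c.
pose h := fun j : 'I_k.+1 => widen_ord kq j.
set X := colsub h A.
have Z : X = pid_mx k *m X.
  apply/matrixP => i j; rewrite [RHS]mxE (bigD1 i) //= big1 ?addr0.
    rewrite [pid_mx _ _ _]mxE eqxx /=; case: ltnP => ik; first by rewrite mul1r.
    rewrite mul0r /A !mxE bin_small //; apply: leq_trans (ir i ik (ltn_ord i)).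
    apply: leq_ltn_trans ck; have := ltn_ord j; rewrite ltnS leq_eqVlt => /orP[/eqP e|jk].
      by rewrite /= e.
    by apply: ltnW; apply: ic.
  move=> l li; rewrite [pid_mx _ _ _]mxE (_ : (nat_of_ord i == l) = false) ?mul0r //.
  by apply/negbTE; rewrite eq_sym; exact: li.
have r1 : (\rank X <= k)%N.
  by rewrite Z; apply: leq_trans (mxrankM_maxl _ _) _; rewrite rank_pid_mx // ltnW.
have r2 : (k.+1 <= \rank X)%N.
  have E1 : (rowsub h 1%:M *m invmx A) *m X = 1%:M.
    rewrite -mulmxA /X mulmx_colsub mulVmx // -mxsub_mul mul1mx.
    by apply/matrixP => i j; rewrite !mxE.
  by have := mxrankM_maxr (rowsub h 1%:M *m invmx A) X; rewrite E1 mxrank1.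
lia.
Qed.

Lemma sel_incr s : selection s -> incr (size s) (nth 0%N s).
Proof. by move=> hs i j ij jx; apply: (sorted_ltn_nth ltn_trans 0%N hs) => //=; apply: ltn_trans jx. Qed.

Lemma sorted_subset_subseq (s1 s2 : seq nat) : sorted ltn s1 -> sorted ltn s2 ->
  {subset s1 <= s2} -> subseq s1 s2.
Proof.
move=> h1 h2 sub.
have -> : s1 = filter (fun x => x \in s1) s2.
  apply: (irr_sorted_eq ltn_trans ltnn) => //; first exact: (sorted_filter ltn_trans).
  move=> x; rewrite mem_filter; case: (boolP (x \in s1)) => xs.
    by rewrite /= (sub x xs).
  by [].
exact: filter_subseq.
Qed.

Lemma map_nth_sorted (r ix : seq nat) : sorted ltn r -> sorted ltn ix ->
  all (fun x => x < size r)%N ix -> sorted ltn (map (nth 0%N r) ix).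
Proof.
move=> hr his hall; apply: (homo_sorted_in _ hall his) => x y xr yr xy.
exact: (sorted_ltn_nth ltn_trans 0%N hr).
Qed.

Lemma map_nth_subseq (r ix : seq nat) : sorted ltn r -> sorted ltn ix ->
  all (fun x => x < size r)%N ix -> subseq (map (nth 0%N r) ix) r.
Proof.
move=> hr his hall; apply: sorted_subset_subseq => //; first exact: map_nth_sorted.
by move=> x /mapP[i ii ->]; apply: mem_nth; move/allP: hall; apply.
Qed.

Lemma index_incr (r : seq nat) x y : sorted ltn r -> x \in r -> y \in r -> (x < y)%N ->
  (index x r < index y r)%N.
Proof.
move=> hr xr yr xy; rewrite ltnNge; apply/negP => le.
have hl : sorted leq r by apply: sub_sorted hr => a b; apply: ltnW.
have := sorted_leq_nth leq_trans leqnn 0%N hl; move=> /(_ (index y r) (index x r)).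
rewrite !inE !index_mem !nth_index // => /(_ yr xr le); lia.
Qed.

Lemma rowsub_img (a b M N : nat) (h1 : 'I_a -> 'I_M) (h2 : 'I_b -> 'I_M) (X : 'M[rat]_(M, N)) :
  (forall i, exists j, h1 i = h2 j) -> (rowsub h1 X <= rowsub h2 X)%MS.
Proof.
move=> H; apply/row_subP => i; rewrite row_rowsub; have [j ->] := H i.
rewrite -row_rowsub; exact: row_sub.
Qed.

Lemma rows_extract M N k (A : 'M[rat]_(M.+1, N)) : \rank A = k ->
  exists ix : seq nat, [/\ size ix = k, sorted ltn ix, all (fun x => x < M.+1)%N ix &
    \rank (\matrix_(i < k, j < N) A (inord (nth 0%N ix i)) j) = k].
Proof.
move=> <-; set f0 := maxrankfun A.
exists (sort leq (map (fun i => val (f0 i)) (enum 'I_(\rank A)))).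
set ix := sort _ _.
have uq : uniq ix.
  rewrite sort_uniq map_inj_uniq ?enum_uniq // => i j /val_inj; exact: maxrankfun_inj.
have sz : size ix = \rank A by rewrite size_sort size_map size_enum_ord.
split => //.
- by rewrite ltn_sorted_uniq_leq uq sort_sorted //; exact: leq_total.
- by rewrite all_sort all_map; apply/allP => i _ /=.
have -> : \matrix_(i < \rank A, j < N) A (inord (nth 0%N ix i)) j =
          rowsub (fun i => inord (nth 0%N ix i)) A by apply/matrixP => i j; rewrite !mxE.
have Hf0 : \rank (rowsub f0 A) = \rank A by apply/eqP; exact: maxrowsub_free.
rewrite -[RHS]Hf0; apply/eqP; rewrite eqn_leq !mxrankS //; apply: rowsub_img.
- move=> j; have jin : val (f0 j) \in ix by rewrite mem_sort; apply: map_f; rewrite mem_enum.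
  have ilt : (index (val (f0 j)) ix < \rank A)%N by move: jin; rewrite -index_mem sz.
  exists (Ordinal ilt) => /=; rewrite nth_index //; exact/esym/inord_val.
- move=> i; have : nth 0%N ix i \in ix by apply: mem_nth; rewrite sz.
  rewrite mem_sort => /mapP[j _ ->]; exists j; exact: inord_val.
Qed.

Lemma mx_extract M N k (A : 'M[rat]_(M.+1, N.+1)) : \rank A = k ->
  exists ix jx : seq nat, [/\ size ix = k, size jx = k, sorted ltn ix, sorted ltn jx &
    [/\ all (fun x => x < M.+1)%N ix, all (fun x => x < N.+1)%N jx &
    \matrix_(i < k, j < k) A (inord (nth 0%N ix i)) (inord (nth 0%N jx j)) \in unitmx]].
Proof.
move=> rA; have [ix [s1 s2 s3 s4]] := rows_extract rA.
set B1 := \matrix_(i < k, j < N.+1) A (inord (nth 0%N ix i)) j in s4.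
have rB : \rank B1^T = k by rewrite mxrank_tr.
have [jx [t1 t2 t3 t4]] := rows_extract rB.
exists ix, jx; split => //; split => //.
set C := \matrix_(i < k, j < k) B1^T (inord (nth 0%N jx i)) j in t4.
have -> : \matrix_(i < k, j < k) A (inord (nth 0%N ix i)) (inord (nth 0%N jx j)) = C^T.
  by apply/matrixP => i j; rewrite !mxE.
by rewrite -row_free_unit /row_free mxrank_tr t4.
Qed.

Lemma PM_pascal q rh ch : pascal_sub q q rh ch = PM q (nth 0%N rh) (nth 0%N ch).
Proof. by []. Qed.

Lemma rank_le_max m n p r c rh ch : selection r -> selection c ->
  size r = m.+1 -> size c = n.+1 -> maximal_subpair r c rh ch -> size rh = p.+1 ->
  (\rank (pascal_sub m.+1 n.+1 r c) <= p.+1)%N.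
Proof.
move=> hr hc sr sc [_ Hmax] sp.
set B := pascal_sub m.+1 n.+1 r c.
rewrite leqNgt; apply/negP => lt.
have [ix [jx [s1 s2 s3 s4 [a1 a2 U]]]] := mx_extract (erefl (\rank B)).
move: lt s1 s2 U; set k := \rank B => lt s1 s2 U.
pose rh' := map (nth 0%N r) ix; pose ch' := map (nth 0%N c) jx.
have Ee : pascal_sub k k rh' ch' =
   \matrix_(i < k, j < k) B (inord (nth 0%N ix i)) (inord (nth 0%N jx j)).
  apply/matrixP => i j; rewrite !mxE /rh' /ch' (@nth_map _ 0%N _ 0%N) ?s2 //.
  rewrite (@nth_map _ 0%N _ 0%N) ?s1 // !inordK //.
    by move/allP: a1; apply; apply: mem_nth; rewrite s1.
  by move/allP: a2; apply; apply: mem_nth; rewrite s2.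
have a1' : all (fun x => x < size r)%N ix by rewrite sr.
have a2' : all (fun x => x < size c)%N jx by rewrite sc.
have sel1 : selection rh' by apply: map_nth_sorted.
have sel2 : selection ch' by apply: map_nth_sorted.
have sz1 : size rh' = k by rewrite size_map.
have sz2 : size ch' = k by rewrite size_map.
have ord : ordered_subpair r c rh' ch'.
  split; first by rewrite sz1 sz2.
  - exact: map_nth_subseq.
  - exact: map_nth_subseq.
  move=> i; rewrite sz1 => ik.
  have i1 := sel_incr sel1; have i2 := sel_incr sel2; rewrite sz1 in i1; rewrite sz2 in i2.
  apply: (PM_conv i1 i2) => //; rewrite -PM_pascal Ee; exact: U.
have := Hmax _ _ ord; rewrite sz1; lia.
Qed.

Lemma index_ord (r s : seq nat) m : selection r -> size r = m.+1 -> subseq s r ->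
  forall i, (i < size s)%N -> (index (nth 0%N s i) r < m.+1)%N.
Proof.
move=> hr sr sub i hi; rewrite -sr index_mem; apply: (mem_subseq sub); exact: mem_nth.
Qed.

Close Scope ring_scope.
Unset Implicit Arguments.

Theorem theorem2 (m n p : nat) (r c rh ch : seq nat) :
  selection r -> selection c -> size r = m.+1 -> size c = n.+1 ->
  ordered_subpair r c rh ch -> size rh = p.+1 ->
  [/\ (* (i) *)
      (exists (f : 'I_p.+1 -> 'I_m.+1) (g : 'I_p.+1 -> 'I_n.+1),
         [/\ {homo f : i j / (nat_of_ord i < nat_of_ord j)%N},
             {homo g : i j / (nat_of_ord i < nat_of_ord j)%N} &
             pascal_sub p.+1 p.+1 rh ch = mxsub f g (pascal_sub m.+1 n.+1 r c)])
      /\ pascal_sub p.+1 p.+1 rh ch \in unitmx,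
      (* (ii) *) \rank (pascal_sub p.+1 n.+1 rh c) = p.+1,
      (* (iii) *) \rank (pascal_sub m.+1 p.+1 r ch) = p.+1 &
      maximal_subpair r c rh ch ->
      [/\ (* (iv) *) \rank (pascal_sub m.+1 n.+1 r c) = p.+1,
          (* (v) *) (trmx (pascal_sub m.+1 p.+1 r ch) == trmx (pascal_sub m.+1 n.+1 r c))%MS &
          (* (vi) *) (pascal_sub p.+1 n.+1 rh c == pascal_sub m.+1 n.+1 r c)%MS]].
Proof.
move=> hr hc sr sc [sz sub1 sub2 ordp] sp.
have srh : selection rh by apply: subseq_sorted sub1 hr; exact: ltn_trans.
have sch : selection ch by apply: subseq_sorted sub2 hc; exact: ltn_trans.
have sp' : size ch = p.+1 by rewrite -sz.
pose f := fun i : 'I_p.+1 => (inord (index (nth 0%N rh i) r) : 'I_m.+1).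
pose g := fun i : 'I_p.+1 => (inord (index (nth 0%N ch i) c) : 'I_n.+1).
have fv : forall i : 'I_p.+1, nat_of_ord (f i) = index (nth 0%N rh i) r.
  by move=> i; rewrite /f inordK // (index_ord hr sr sub1) // sp.
have gv : forall i : 'I_p.+1, nat_of_ord (g i) = index (nth 0%N ch i) c.
  by move=> i; rewrite /g inordK // (index_ord hc sc sub2) // sp'.
have fe : forall i : 'I_p.+1, nth 0%N r (f i) = nth 0%N rh i.
  by move=> i; rewrite fv nth_index //; apply: (mem_subseq sub1); apply: mem_nth; rewrite sp.
have ge : forall i : 'I_p.+1, nth 0%N c (g i) = nth 0%N ch i.
  by move=> i; rewrite gv nth_index //; apply: (mem_subseq sub2); apply: mem_nth; rewrite sp'.
have ir := sel_incr srh; have ic := sel_incr sch; rewrite sp in ir; rewrite sp' in ic.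
have PH : pascal_sub p.+1 p.+1 rh ch \in unitmx.
  rewrite PM_pascal unitmxE unitfE; have [_ H] := PM_pos ir ic.
  by apply: lt0r_neq0; apply: H => i ip; apply: ordp; rewrite sp.
set B := pascal_sub m.+1 n.+1 r c.
set R := pascal_sub p.+1 n.+1 rh c.
set C := pascal_sub m.+1 p.+1 r ch.
have RB : R = rowsub f B by apply/matrixP => i j; rewrite !mxE fe.
have CB : C = colsub g B by apply/matrixP => i j; rewrite !mxE ge.
have RH : colsub g R = pascal_sub p.+1 p.+1 rh ch by apply/matrixP => i j; rewrite !mxE ge.
have CH : rowsub f C = pascal_sub p.+1 p.+1 rh ch by apply/matrixP => i j; rewrite !mxE fe.
have rR : \rank R = p.+1.
  apply/eqP; rewrite eqn_leq rank_leq_row /=.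
  rewrite -{1}(mxrank_unit PH) -RH -[R in colsub g R]mulmx1 -mulmx_colsub.
  exact: mxrankM_maxl.
have rC : \rank C = p.+1.
  apply/eqP; rewrite eqn_leq rank_leq_col /=.
  rewrite -{1}(mxrank_unit PH) -CH rowsubE.
  exact: mxrankM_maxr.
split => //.
- split => //; exists f, g; split.
  + move=> i j ij; rewrite !fv; apply: (index_incr hr).
    * by apply: (mem_subseq sub1); apply: mem_nth; rewrite sp.
    * by apply: (mem_subseq sub1); apply: mem_nth; rewrite sp.
    by apply: ir.
  + move=> i j ij; rewrite !gv; apply: (index_incr hc).
    * by apply: (mem_subseq sub2); apply: mem_nth; rewrite sp'.
    * by apply: (mem_subseq sub2); apply: mem_nth; rewrite sp'.
    by apply: ic.
  + by apply/matrixP => i j; rewrite !mxE fe ge.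
move=> hmax.
have rB : (\rank B <= p.+1)%N by apply: (rank_le_max hr hc sr sc hmax sp).
have RsB : (R <= B)%MS by rewrite RB rowsubE submxMl.
have rB' : \rank B = p.+1.
  by apply/eqP; rewrite eqn_leq rB /= -rR mxrankS.
have CsB : ((trmx C) <= (trmx B))%MS.
  have -> : (trmx C) = rowsub g (trmx B) by apply/matrixP => i j; rewrite CB !mxE.
  by rewrite rowsubE submxMl.
split => //.
- apply/andP; split => //.
  by rewrite -(mxrank_leqif_sup CsB).2 !mxrank_tr rC rB'.
- apply/andP; split => //.
  by rewrite -(mxrank_leqif_sup RsB).2 rR rB'.
Qed.
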